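(* Let $m\ge 1$ and let $G$ be any co-bipartite graph $\overline{B(K_m,K_2)}$, i.e. any graph whose vertex set is the disjoint union of a clique $K_m$ on $m$ vertices and a clique $K_2$ on $2$ vertices, with an arbitrary set of edges between $V(K_m)$ and $V(K_2)$. Then $G$ is word-representable.
   Context: A graph $G=(V,E)$ is word-representable if there exists a word $w$ over the alphabet $V$, containing every letter of $V$ at least once, such that for all distinct $x,y\in V$, the letters $x$ and $y$ alternate in $w$ (i.e., the subword of $w$ obtained by deleting all letters other than $x,y$ has no two equal consecutive letters) if and only if $xy\in E$. $\overline{B(K_m,K_n)}$ denotes a co-bipartite graph whose vertex set is partitioned into two cliques $K_m$ and $K_n$ of sizes $m$ and $n$, with arbitrary edges between the two cliques. *)

(* Defs.v *)
From mathcomp Require Import all_boot.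
Set Implicit Arguments. Unset Strict Implicit. Unset Printing Implicit Defensive.

Definition simple_graph (T : finType) (e : rel T) : Prop :=
  symmetric e /\ irreflexive e.

Definition restrict2 (T : eqType) (w : seq T) (x y : T) : seq T :=
  [seq z <- w | (z == x) || (z == y)].

Definition alternate (T : eqType) (w : seq T) (x y : T) : bool :=
  let s := restrict2 w x y in
  all (fun p => p.1 != p.2) (zip s (behead s)).

Definition represents (T : finType) (e : rel T) (w : seq T) : Prop :=
  (forall x : T, x \in w) /\
  (forall x y : T, x != y -> (alternate w x y <-> e x y)).

Definition word_representable (T : finType) (e : rel T) : Prop :=
  exists w : seq T, represents e w.

Definition is_clique (T : finType) (e : rel T) (A : {set T}) : Prop :=
  forall x y, x \in A -> y \in A -> x != y -> e x y.

(* Main.v *)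
Require Import Defs.
From mathcomp Require Import all_boot.
Set Implicit Arguments. Unset Strict Implicit. Unset Printing Implicit Defensive.

Definition W (T : finType) (e : rel T) (a b : T) (r la lb : seq T) : seq T :=
  filter (fun z => e z a && e z b) r ++ filter (fun z => ~~ e z a && e z b) r ++
  filter (fun z => ~~ e z a && ~~ e z b) r ++ la ++
  filter (fun z => e z a && ~~ e z b) r ++ lb ++
  filter (fun z => e z a && e z b) r ++ la ++
  filter (fun z => ~~ e z a && e z b) r ++ lb ++
  filter (fun z => ~~ e z a && ~~ e z b) r ++ filter (fun z => e z a && ~~ e z b) r.

Lemma restrict2_cat (T : eqType) (u v : seq T) x y :
  restrict2 (u ++ v) x y = restrict2 u x y ++ restrict2 v x y.
Proof. by rewrite /restrict2 filter_cat. Qed.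

Lemma restrict2_filter (T : eqType) (p : pred T) (r : seq T) x y :
  restrict2 (filter p r) x y = filter p (restrict2 r x y).
Proof. by rewrite /restrict2 -!filter_predI; apply: eq_filter => z /=; rewrite andbC. Qed.

Lemma restrict_W (T : finType) (e : rel T) a b r la lb x y :
  restrict2 (W e a b r la lb) x y =
  W e a b (restrict2 r x y) (restrict2 la x y) (restrict2 lb x y).
Proof. by rewrite /W !restrict2_cat !restrict2_filter. Qed.

Lemma alternate_sym (T : eqType) (w : seq T) x y : alternate w x y = alternate w y x.
Proof.
rewrite /alternate /restrict2 (@eq_filter _ _ (fun z => (z == y) || (z == x))) //.
by move=> z; rewrite orbC.
Qed.

Lemma two_elem (T : eqType) (s : seq T) x y : uniq s -> x \in s -> y \in s -> x != y ->
  restrict2 s x y = [:: x; y] \/ restrict2 s x y = [:: y; x].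
Proof.
move=> Us xs ys xy.
have Ur : uniq (restrict2 s x y) by rewrite filter_uniq.
have Hp : perm_eq (restrict2 s x y) [:: x; y].
  apply: uniq_perm => //=; first by rewrite inE xy.
  by move=> z; rewrite mem_filter !inE; case: eqP => [->|_]; case: eqP => [->|_] //=; rewrite ?andbF.
have Hs := perm_size Hp.
move: Ur Hp Hs; case: (restrict2 s x y) => [|u [|v [|? ?]]] // Ur Hp _.
have Hu: u \in [:: x; y] by rewrite -(perm_mem Hp) inE eqxx.
have Hv: v \in [:: x; y] by rewrite -(perm_mem Hp) !inE eqxx orbT.
move: Ur => /= /andP[]; rewrite inE => Huv _.
move: Hu Hv Huv; rewrite !inE => /orP[]/eqP-> /orP[]/eqP->; rewrite ?eqxx; auto; by [].
Qed.

Lemma one_elem (T : eqType) (s : seq T) x y : uniq s -> x \in s -> y \notin s ->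
  restrict2 s x y = [:: x].
Proof.
move=> Us xs ys; rewrite /restrict2 -(filter_pred1_uniq Us xs).
apply: eq_in_filter => z zs /=.
have -> : (z == y) = false by apply/eqP => E; rewrite -E zs in ys.
by rewrite orbF.
Qed.

Theorem mainTheorem8 (m : nat) (T : finType) (e : rel T) (A : {set T}) :
  1 <= m ->
  simple_graph e ->
  #|A| = m ->
  #|~: A| = 2 ->
  is_clique e A ->
  is_clique e (~: A) ->
  word_representable e.
Proof.
move=> _ [esym eirr] _ HC HA HB.
have Hsz : size (enum (~: A)) = 2 by rewrite -cardE.
have U := enum_uniq (pred_of_set (~: A)).
have memC z : (z \in ~: A) = (z \in enum (~: A)) by rewrite mem_enum.
move: Hsz U memC; case: (enum (~: A)) => [|a [|b [|? ?]]] //= _.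
rewrite !inE andbT => hab memC.
have aA : a \notin A by rewrite -in_setC memC !inE eqxx.
have bA : b \notin A by rewrite -in_setC memC !inE eqxx orbT.
have eab : e a b by apply: HB; rewrite ?memC ?inE ?eqxx ?orbT.
have sA := enum_uniq (pred_of_set A).
have Hout z : z \notin A -> (z = a) \/ (z = b).
  by rewrite -in_setC memC !inE => /orP[]/eqP; auto.
exists (W e a b (enum A) [:: a] [:: b]); split.
  move=> x; case: (boolP (x \in A)) => xA.
    have xe : x \in enum A by rewrite mem_enum.
    rewrite /W !mem_cat !(mem_filter _ x (enum A)) xe.
    by case: (e x a); case: (e x b); rewrite /= ?orbT.
  by case: (Hout x xA) => ->; rewrite /W !mem_cat !inE eqxx ?orbT.
have eA : enum A =i A by move=> z; rewrite mem_enum.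
have key : forall x y, x \in A -> x != y ->
    (alternate (W e a b (enum A) [:: a] [:: b]) x y <-> e x y).
  move=> x y xA xy.
  have xa : (x == a) = false by apply/eqP => E; rewrite -E xA in aA.
  have xb : (x == b) = false by apply/eqP => E; rewrite -E xA in bA.
  have ax : (a == x) = false by rewrite eq_sym.
  have bx : (b == x) = false by rewrite eq_sym.
  have ba : (b == a) = false by rewrite eq_sym; apply/negbTE.
  have ab : (a == b) = false by apply/negbTE.
  have yx : (y == x) = false by rewrite eq_sym; apply/negbTE.
  have xy' : (x == y) = false by apply/negbTE.
  case: (boolP (y \in A)) => yA.
    have exy : e x y by apply: HA.
    have ya : (a == y) = false by apply/eqP => E; rewrite E yA in aA.
    have yb : (b == y) = false by apply/eqP => E; rewrite E yA in bA.
    rewrite exy; split => // _.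
    rewrite /alternate restrict_W.
    have xe : x \in enum A by rewrite eA.
    have ye : y \in enum A by rewrite eA.
    have [->|->] := @two_elem _ _ x y sA xe ye xy;
    rewrite /restrict2 /= ?ax ?xa ?ya ?yb ?bx ?xb /W /=;
    by case: (e x a); case: (e x b); case: (e y a); case: (e y b);
      rewrite /= ?xy' ?yx.
  have E1 : restrict2 (enum A) x y = [:: x].
    by apply: one_elem => //; rewrite eA.
  rewrite /alternate restrict_W E1.
  case: (Hout y yA) => ->; rewrite /restrict2 /= ?ax ?bx ?ab ?ba ?eqxx /W /=;
  by case: (e x a); case: (e x b); rewrite /= ?xa ?ax ?xb ?bx ?ab ?ba ?eqxx; split.
move=> x y xy.
case: (boolP (x \in A)) => xA; first exact: key.
case: (boolP (y \in A)) => yA.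
  rewrite alternate_sym esym; apply: key => //; by rewrite eq_sym.
have E0 : restrict2 (enum A) x y = [::].
  apply/eqP; rewrite -size_eq0 size_filter -leqn0 leqNgt -has_count; apply/hasPn => z.
  rewrite eA => zA; apply/negP => /orP[]/eqP E; [by rewrite -E zA in xA | by rewrite -E zA in yA].
have ab : (a == b) = false by apply/negbTE.
have ba : (b == a) = false by rewrite eq_sym.
rewrite /alternate restrict_W E0.
case: (Hout x xA) => Ex; case: (Hout y yA) => Ey; subst x y; rewrite ?eqxx // in xy;
  rewrite /restrict2 /W /= ?eqxx ?ab ?ba /= ?eab ?(esym b a) ?eab ?hab ?(eq_sym b a) ?hab; by split.
Qed.
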